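(* Let $a_1>0$ and $a_1^2+4a_2<0$, and let $X$ be the AR(2)-process with these coefficients. Assume $\mathbb{P}(Y_1>0)>0$. Then there exists $\lambda>0$ such that $\mathbb{P}(\sup_{n=1,\dots,N}X_n\le0)\precsim\exp(-\lambda N)$ as $N\to\infty$.
   Context: Let $(Y_n)_{n\ge1}$ be i.i.d. nondegenerate real random variables. The AR(2)-process is $X_n=a_1X_{n-1}+a_2X_{n-2}+Y_n$ for $n\ge1$ with $X_n=0$ for $n\le0$. $f\precsim g$ means $\limsup_{N\to\infty} f(N)/g(N)<\infty$. *)

(* Defs.v *)
From mathcomp Require Import all_boot all_order all_algebra.
From mathcomp Require Import all_classical all_reals all_analysis.
Set Implicit Arguments. Unset Strict Implicit. Unset Printing Implicit Defensive.
Import Order.TTheory GRing.Theory Num.Theory.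
Local Open Scope classical_set_scope.
Local Open Scope ring_scope.

Definition mutually_independent d (T : measurableType d) (R : realType)
  (P : probability T R) (Y : nat -> {RV P >-> R}) : Prop :=
  forall (J : seq nat) (B : nat -> set R),
    uniq J -> (forall j, j \in J -> measurable (B j)) ->
    P (\bigcap_(j in [set j | j \in J]) (Y j @^-1` B j)) =
    (\prod_(j <- J) P (Y j @^-1` B j))%E.

Definition identically_distributed d (T : measurableType d) (R : realType)
  (P : probability T R) (Y : nat -> {RV P >-> R}) : Prop :=
  forall n (B : set R), measurable B -> P (Y n @^-1` B) = P (Y 0%N @^-1` B).

Definition iid d (T : measurableType d) (R : realType)
  (P : probability T R) (Y : nat -> {RV P >-> R}) : Prop :=
  mutually_independent Y /\ identically_distributed Y.

Definition nondegenerate_rv d (T : measurableType d) (R : realType)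
  (P : probability T R) (X : {RV P >-> R}) : Prop :=
  forall c : R, (P (X @^-1` [set c]) < 1)%E.

(* AR(2) path driven by the innovations y : nat -> R, where y k plays the role
   of Y_{k+1}.  ar2 a1 a2 y n = X_n, with X_0 = X_{-1} = 0,
   X_1 = Y_1, X_{n+2} = a1 X_{n+1} + a2 X_n + Y_{n+2}. *)
Fixpoint ar2 (R : pzRingType) (a1 a2 : R) (y : nat -> R) (n : nat) : R :=
  match n with
  | 0 => 0
  | 1 => y 0%N
  | S ((S m) as m1) => a1 * ar2 a1 a2 y m1 + a2 * ar2 a1 a2 y m + y m1
  end.

(* Main.v *)
Require Import Defs.
From mathcomp Require Import all_boot all_order all_algebra.
From mathcomp Require Import all_classical all_reals all_analysis.
From mathcomp Require Import measurable_realfun.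
From mathcomp Require Import zify ring lra.
Import Order.TTheory GRing.Theory Num.Theory.
Set Implicit Arguments. Unset Strict Implicit.
Local Open Scope classical_set_scope.
Local Open Scope ring_scope.

Definition Zop (R : realType) (A B : R) (h : nat) (X : nat -> R) (m : nat) : R :=
  X (m + 2 * h)%N - A * X (m + h)%N + B * X m.

Lemma Zop_double (R : realType) (A B : R) h X n :
  Zop (A ^+ 2 - 2 * B) (B ^+ 2) (2 * h) X n =
  Zop A B h X (n + 2 * h) + A * Zop A B h X (n + h) + B * Zop A B h X n.
Proof.
rewrite /Zop.
have -> : (n + 2 * h + 2 * h = n + 2 * (2 * h))%N by lia.
have -> : (n + 2 * h + h = n + h + 2 * h)%N by lia.
have -> : (n + h + h = n + 2 * h)%N by lia.
ring.
Qed.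

Lemma det_nonpos (R : realType) (A B : R) h X m :
  0 <= B -> A <= 0 -> 0 < Zop A B h X m ->
  exists j, (j <= 2 * h)%N /\ 0 < X (m + j)%N.
Proof.
move=> B0 A0; rewrite /Zop => HZ.
case: (ltrP 0 (X (m + 2 * h)%N)) => H2; first by exists (2 * h)%N.
case: (ltrP 0 (X (m + h)%N)) => H1; first by exists h; split => //; lia.
case: (ltrP 0 (X m)) => H0; first by exists 0%N; rewrite addn0.
have : 0 <= A * X (m + h)%N by apply: mulr_le0.
have : B * X m <= 0 by apply: mulr_ge0_le0.
lra.
Qed.

Lemma det_key (R : realType) k : forall (A B : R) h X m,
  0 <= B -> (A <= 0 \/ 4 * B <= (2 ^ k)%:R * (4 * B - A ^+ 2)) ->
  (forall j, (j + 2 * h <= 2 ^ k.+1 * h)%N -> 0 < Zop A B h X (m + j)%N) ->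
  exists j, (j <= 2 ^ k.+1 * h)%N /\ 0 < X (m + j)%N.
Proof.
elim: k => [|k IH] A B h X m B0 HA HZ.
- have A0 : A <= 0.
    case: HA => // HA; rewrite expn0 mulr1n mul1r in HA.
    case: (lerP A 0) => // Ap.
    have : 0 < A ^+ 2 by rewrite exprn_gt0.
    lra.
  have HZ0 : 0 < Zop A B h X m by rewrite -[m]addn0; apply: HZ; rewrite expn1; lia.
  have [j [Hj Hx]] := det_nonpos B0 A0 HZ0.
  by exists j; split => //; rewrite expn1.
case: (lerP A 0) => [A0|Ap].
  have HZ0 : 0 < Zop A B h X m.
    rewrite -[m]addn0; apply: HZ; rewrite add0n !expnS; have := expn_gt0 2 k; move: (2 ^ k)%N => t; nia.
  have [j [Hj Hx]] := det_nonpos B0 A0 HZ0.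
  exists j; split => //; have := expn_gt0 2 k; rewrite !expnS; move: (2 ^ k)%N => t; nia.
have HA' : 4 * B <= 2 * (2 ^ k)%:R * (4 * B - A ^+ 2).
  case: HA => [|HA]; first lra.
  by rewrite expnS natrM in HA.
have t0 : 0 <= (2 ^ k)%:R :> R by [].
have [j [Hj Hx]] : exists j, (j <= 2 ^ k.+1 * (2 * h))%N /\ 0 < X (m + j)%N.
  apply: (IH (A ^+ 2 - 2 * B) (B ^+ 2) (2 * h) X m); first exact: sqr_ge0.
  - case: (lerP (A ^+ 2) (2 * B)) => HAB; first by left; lra.
    right; move: (2 ^ k)%:R HA' t0 => t HA' t0.
    have h1 : 0 <= (A ^+ 2 - 2 * B) * (t * (4 * B - A ^+ 2)).
      apply: mulr_ge0; first lra.
      nra.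
    have h2 : 0 <= B * (2 * t * (4 * B - A ^+ 2) - 4 * B).
      apply: mulr_ge0; lra.
    nra.
  - move=> j Hj; rewrite Zop_double.
    have e1 : (m + j + 2 * h = m + (j + 2 * h))%N by lia.
    have e2 : (m + j + h = m + (j + h))%N by lia.
    rewrite e1 e2.
    have E : (2 ^ k.+1 * (2 * h) = 2 ^ k.+2 * h)%N by rewrite (expnS 2 k.+1) mulnCA mulnA.
    rewrite E in Hj.
    have z1 := HZ (j + 2 * h)%N ltac:(lia).
    have z2 := HZ (j + h)%N ltac:(lia).
    have z3 := HZ j ltac:(lia).
    have : 0 < A * Zop A B h X (m + (j + h))%N by apply: mulr_gt0.
    have : 0 <= B * Zop A B h X (m + j)%N by apply: mulr_ge0 => //; apply: ltW.
    lra.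
exists j; split => //.
have E : (2 ^ k.+1 * (2 * h) = 2 ^ k.+2 * h)%N by rewrite (expnS 2 k.+1) mulnCA mulnA.
by rewrite -E.
Qed.

Lemma Zop_ar2 (R : realType) (a1 a2 : R) y m :
  Zop a1 (- a2) 1 (ar2 a1 a2 y) m = y m.+1.
Proof.
rewrite /Zop muln1 addn1 addn2 /=; ring.
Qed.

Lemma det_ar2 (R : realType) (a1 a2 : R) k y m : 0 <= - a2 ->
  (a1 <= 0 \/ 4 * (- a2) <= (2 ^ k)%:R * (4 * (- a2) - a1 ^+ 2)) ->
  (forall j, (j + 2 <= 2 ^ k.+1)%N -> 0 < y (m + j).+1) ->
  exists j, (j <= 2 ^ k.+1)%N /\ 0 < ar2 a1 a2 y (m + j).
Proof.
move=> B0 HA HY.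
have HZ : forall j, (j + 2 * 1 <= 2 ^ k.+1 * 1)%N -> 0 < Zop a1 (- a2) 1 (ar2 a1 a2 y) (m + j)%N.
  by move=> j; rewrite !muln1 Zop_ar2; apply: HY.
have [j [Hj Hx]] := det_key B0 HA HZ.
by exists j; rewrite muln1 in Hj.
Qed.

Lemma exists_k (R : realType) (A B : R) : 0 < 4 * B - A ^+ 2 ->
  exists k, 4 * B <= (2 ^ k)%:R * (4 * B - A ^+ 2).
Proof.
move=> Hu.
set x := 4 * B / (4 * B - A ^+ 2).
case: (lerP 0 x) => x0; last first.
  exists 0%N; rewrite expn0 mulr1n mul1r.
  move: x0; rewrite /x ltr_pdivrMr // mul0r; lra.
have := archi_boundP x0; set n := Num.bound x => Hn.
exists n.
have Hn2 : (n <= 2 ^ n)%N by apply: ltnW; apply: ltn_expl.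
have : x <= (2 ^ n)%:R by apply: le_trans (ltW Hn) _; rewrite ler_nat.
by rewrite /x ler_pdivrMr.
Qed.

Definition Fcap d (T : measurableType d) (R : realType) (P : probability T R)
  (Y : nat -> {RV P >-> R}) (J : seq nat) (B : nat -> set R) : set T :=
  \bigcap_(j in [set j | j \in J]) (Y j @^-1` B j).

Lemma mFcap d (T : measurableType d) (R : realType) (P : probability T R)
  (Y : nat -> {RV P >-> R}) J B :
  (forall j, j \in J -> measurable (B j)) -> measurable (Fcap Y J B).
Proof.
move=> mB; apply: fin_bigcap_measurable; first exact: finite_seq.
by move=> j Jj; apply: measurable_funPTI; apply: mB.
Qed.

Lemma Fcap_cat d (T : measurableType d) (R : realType) (P : probability T R)
  (Y : nat -> {RV P >-> R}) J J' B :
  Fcap Y (J ++ J') B = Fcap Y J B `&` Fcap Y J' B.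
Proof.
rewrite /Fcap; apply/seteqP; split => w.
  by move=> H; split => j Jj; apply: H; rewrite /= mem_cat Jj ?orbT.
by move=> [H1 H2] j; rewrite /= mem_cat => /orP [] Jj; [apply: H1|apply: H2].
Qed.

Lemma Fcap_eq d (T : measurableType d) (R : realType) (P : probability T R)
  (Y : nat -> {RV P >-> R}) J B B' :
  (forall j, j \in J -> B j = B' j) -> Fcap Y J B = Fcap Y J B'.
Proof.
move=> H; rewrite /Fcap; apply/seteqP; split => w W j Jj.
  by rewrite -H //; apply: W.
by rewrite H //; apply: W.
Qed.

Definition blk (K b : nat) : seq nat := [seq (b * K + 2 + j)%N | j <- iota 0 K.-1].

Lemma blk_uniq K b : uniq (blk K b).
Proof.
rewrite map_inj_uniq ?iota_uniq // => x y; lia.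
Qed.

Lemma blk_mem K b j : j \in blk K b -> (b * K + 2 <= j /\ j < b * K + 2 + K.-1)%N.
Proof. by move=> /mapP [i]; rewrite mem_iota add0n => /andP [_ Hi] ->; lia. Qed.

Lemma blk_in K b i : (i < K.-1)%N -> (b * K + 2 + i)%N \in blk K b.
Proof. by move=> Hi; apply: map_f; rewrite mem_iota add0n. Qed.

Lemma blk_disj K b b' j : (b < b')%N -> j \in blk K b' -> j \notin blk K b.
Proof.
move=> bb /blk_mem [H1 H2]; apply/negP => /blk_mem [H3 H4].
have : (b.+1 * K <= b' * K)%N by rewrite leq_mul2r bb orbT.
rewrite mulSn; lia.
Qed.

Definition pos (R : realType) : set R := `](0 : R), +oo[%classic.

Arguments pos R : clear implicits.

Lemma mpos (R : realType) : measurable (pos R).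
Proof. exact: measurable_itv. Qed.

Definition Gb d (T : measurableType d) (R : realType) (P : probability T R)
  (Y : nat -> {RV P >-> R}) K b : set T := Fcap Y (blk K b) (fun _ => pos R).

Fixpoint Sf d (T : measurableType d) (R : realType) (P : probability T R)
  (Y : nat -> {RV P >-> R}) K M : set T :=
  match M with 0%N => setT | M'.+1 => Sf Y K M' `&` ~` Gb Y K M' end.

Lemma mGb d (T : measurableType d) (R : realType) (P : probability T R)
  (Y : nat -> {RV P >-> R}) K b : measurable (Gb Y K b).
Proof. by apply: mFcap => j _; exact: mpos. Qed.

Lemma mSf d (T : measurableType d) (R : realType) (P : probability T R)
  (Y : nat -> {RV P >-> R}) K M : measurable (Sf Y K M).
Proof.
elim: M => [|M IH] /=; first exact: measurableT.
by apply: measurableI => //; apply: measurableC; exact: mGb.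
Qed.

Lemma prod_constE (R : realType) (s : seq nat) (x : R) :
  (\prod_(j <- s) x%:E)%E = (x ^+ size s)%:E.
Proof.
elim: s => [|a s IH]; first by rewrite big_nil expr0.
by rewrite big_cons IH /= exprS EFinM.
Qed.

Lemma PGb d (T : measurableType d) (R : realType) (P : probability T R)
  (Y : nat -> {RV P >-> R}) K b : iid Y ->
  P (Gb Y K b) = ((fine (P (Y 0%N @^-1` pos R))) ^+ K.-1)%:E.
Proof.
move=> [Hind Hid].
rewrite /Gb /Fcap Hind ?blk_uniq //; last by move=> *; exact: mpos.
rewrite (eq_bigr (fun _ => (fine (P (Y 0%N @^-1` pos R)))%:E)).
  by rewrite prod_constE size_map size_iota.
move=> j _; rewrite Hid ?fineK //; last exact: mpos.
by rewrite fin_num_measure //; apply: measurable_funPTI; exact: mpos.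
Qed.

Lemma key d (T : measurableType d) (R : realType) (P : probability T R)
  (Y : nat -> {RV P >-> R}) K : iid Y -> forall M J B,
  uniq J -> (forall j, j \in J -> measurable (B j)) ->
  (forall j b, j \in J -> (b < M)%N -> j \notin blk K b) ->
  P (Fcap Y J B `&` Sf Y K M) =
  (P (Fcap Y J B) * ((1 - (fine (P (Y 0%N @^-1` pos R))) ^+ K.-1) ^+ M)%:E)%E.
Proof.
move=> HY; set q := _ ^+ K.-1.
elim => [|M IH] J B uJ mB dJ; first by rewrite /= setIT expr0 mule1.
set E := Fcap Y J B.
have mE : measurable E by exact: mFcap.
have mS := mSf Y K M.
have mG := mGb Y K M.
set B' := fun j => if j \in J then B j else pos R.
have EG : E `&` Gb Y K M = Fcap Y (J ++ blk K M) B'.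
  rewrite Fcap_cat /E /Gb; congr (_ `&` _); apply: Fcap_eq => j Jj; rewrite /B'.
    by rewrite Jj.
  have := dJ j M; case: (j \in J) => //.
  by move=> /(_ isT (ltnSn M)); rewrite Jj.
have uJ' : uniq (J ++ blk K M).
  rewrite cat_uniq uJ blk_uniq andbT /=; apply/hasPn => j Jj; apply/negP => JJ.
  by have := dJ j M JJ (ltnSn M); rewrite Jj.
have mB' : forall j, j \in J ++ blk K M -> measurable (B' j).
  by move=> j _; rewrite /B'; case: ifP => Jj; [apply: mB|exact: mpos].
have dJ' : forall j b, j \in J ++ blk K M -> (b < M)%N -> j \notin blk K b.
  move=> j b; rewrite mem_cat => /orP [Jj|Jj] bM.
    by apply: dJ => //; exact: ltnW.
  exact: blk_disj bM Jj.
have H1 := IH J B uJ mB (fun j b Jj bM => dJ j b Jj (ltnW bM)).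
have H2 := IH _ _ uJ' mB' dJ'.
have PEG : P (Fcap Y (J ++ blk K M) B') = (P E * q%:E)%E.
  case: HY => Hind Hid.
  rewrite Hind // big_cat /= /E /Fcap Hind //.
  congr (_ * _)%E.
    by apply: eq_big_seq => j Jj; rewrite /B' Jj.
  have := PGb K M (conj Hind Hid); rewrite /Gb /Fcap Hind ?blk_uniq //; last by move=> *; exact: mpos.
  move=> <-; apply: eq_big_seq => j Jj; rewrite /B'.
  case: ifP => // JJ; have := dJ j M JJ (ltnSn M); by rewrite Jj.
have D : P (E `&` Sf Y K M) = (P ((E `&` Sf Y K M) `\` Gb Y K M) + P ((E `&` Sf Y K M) `&` Gb Y K M))%E.
  by apply: measureDI => //; apply: measurableI.
rewrite PEG -EG setIAC in H2.
have -> : E `&` Sf Y K M.+1 = (E `&` Sf Y K M) `\` Gb Y K M by rewrite /= setDE setIA.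
fold E in H1; move: D; rewrite H1 H2.
have fE : P E \is a fin_num by rewrite fin_num_measure.
have fX : P ((E `&` Sf Y K M) `\` Gb Y K M) \is a fin_num.
  by rewrite fin_num_measure //; apply: measurableD => //; apply: measurableI.
rewrite -(fineK fE) -(fineK fX) -!EFinM -EFinD => -[Hr].
congr EFin; rewrite exprS.
move: Hr; move: (fine (P E)) => e; move: (fine (P (_ `\` _))) => x.
move: ((1 - q) ^+ M) => r Hr.
have -> : x = e * r - e * q * r by rewrite Hr; ring.
ring.
Qed.

Lemma mar2 d (T : measurableType d) (R : realType) (P : probability T R)
  (Y : nat -> {RV P >-> R}) (a1 a2 : R) n :
  measurable_fun setT (fun w => ar2 a1 a2 (fun k => Y k w) n).
Proof.
suff H : forall n, measurable_fun setT (fun w => ar2 a1 a2 (fun k => Y k w) n) /\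
  measurable_fun setT (fun w => ar2 a1 a2 (fun k => Y k w) n.+1) by case: (H n).
clear n.
elim => [|n [IH1 IH2]].
  by split; [exact: measurable_cst | exact: measurable_funPT].
split => //.
apply: measurable_funD; last exact: measurable_funPT.
apply: measurable_funD; apply: measurable_funM => //; exact: measurable_cst.
Qed.

Lemma mEv d (T : measurableType d) (R : realType) (P : probability T R)
  (Y : nat -> {RV P >-> R}) (a1 a2 : R) N :
  measurable [set w | forall n : nat, (1 <= n <= N)%N ->
                    (ar2 a1 a2 (fun k => Y k w) n <= 0)%R].
Proof.
have -> : [set w | forall n : nat, (1 <= n <= N)%N ->
                    (ar2 a1 a2 (fun k => Y k w) n <= 0)%R] =
  \bigcap_(n in [set n | n \in iota 1 N])
     ((fun w => ar2 a1 a2 (fun k => Y k w) n) @^-1` `]-oo, (0 : R)]%classic).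
  apply/seteqP; split => w /= H n.
    move=> Hn; have Hn' : (1 <= n <= N)%N by move: Hn; rewrite /= mem_iota; lia.
    by rewrite /= in_itv /=; apply: H.
  move=> Hn; have := H n; rewrite /= in_itv /=; apply.
  by rewrite /= mem_iota; lia.
apply: fin_bigcap_measurable; first exact: finite_seq.
move=> n _; rewrite -[X in measurable X]setTI; apply: mar2 => //.
Qed.

Lemma Ev_sub d (T : measurableType d) (R : realType) (P : probability T R)
  (Y : nat -> {RV P >-> R}) (a1 a2 : R) k N : 0 <= - a2 ->
  (a1 <= 0 \/ 4 * (- a2) <= (2 ^ k)%:R * (4 * (- a2) - a1 ^+ 2)) ->
  forall M, (M * 2 ^ k.+1 + 1 <= N)%N ->
  [set w | forall n : nat, (1 <= n <= N)%N ->
                    (ar2 a1 a2 (fun k => Y k w) n <= 0)%R] `<=` Sf Y (2 ^ k.+1) M.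
Proof.
move=> B0 HA; elim => [|M IH] HM w Hw //=.
split; first by apply: IH => //; rewrite mulSn in HM; lia.
move=> HG.
have HY : forall j, (j + 2 <= 2 ^ k.+1)%N -> 0 < (fun k => Y k w) ((M * 2 ^ k.+1).+1 + j).+1.
  move=> j Hj /=.
  have e : (((M * 2 ^ k.+1).+1 + j).+1 = M * 2 ^ k.+1 + 2 + j)%N by lia.
  rewrite e; have := HG _ (@blk_in (2 ^ k.+1) M j ltac:(lia)).
  by rewrite /pos /= in_itv /= andbT.
have [j [Hj Hx]] := det_ar2 (y := fun k => Y k w) (m := (M * 2 ^ k.+1).+1) B0 HA HY.
have := Hw ((M * 2 ^ k.+1).+1 + j)%N ltac:(rewrite mulSn in HM; lia).
lra.
Qed.

Lemma Fcap_nil d (T : measurableType d) (R : realType) (P : probability T R)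
  (Y : nat -> {RV P >-> R}) B : Fcap Y [::] B = setT.
Proof. by apply/seteqP; split => w // _ j. Qed.

Lemma divfacts (K N : nat) : (0 < K)%N -> (1 <= N)%N ->
  (N.-1 %/ K * K + 1 <= N)%N /\ (N <= (N.-1 %/ K).+1 * K)%N.
Proof.
move=> K0 N1; have h1 := leq_divM N.-1 K; have h2 := ltn_ceil N.-1 K0.
move: (N.-1 %/ K * K)%N (((N.-1 %/ K).+1 * K))%N h1 h2 => x y h1 h2; lia.
Qed.

Theorem mainTheorem12 (d : measure_display) (T : measurableType d)
  (R : realType) (P : probability T R) (Y : nat -> {RV P >-> R}) (a1 a2 : R) :
  iid Y -> nondegenerate_rv (Y 0%N) ->
  0 < a1 -> a1 ^+ 2 + 4 * a2 < 0 ->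
  (0 < P [set w | (0 < Y 0%N w)%R])%E ->
  exists lambda : R, 0 < lambda /\
    exists C : R, exists N0 : nat, forall N : nat, (N0 <= N)%N ->
      (P [set w | forall n : nat, (1 <= n <= N)%N ->
                    (ar2 a1 a2 (fun k => Y k w) n <= 0)%R]
       <= (C * expR (- lambda * N%:R))%:E)%E.
Proof.
move=> HY _ a1p Hdisc Hpos.
have B0 : 0 <= - a2 by have := sqr_ge0 a1; lra.
have [k Hk] := @exists_k R a1 (- a2) ltac:(lra).
have HA : a1 <= 0 \/ 4 * (- a2) <= (2 ^ k)%:R * (4 * (- a2) - a1 ^+ 2) by right.
set K := (2 ^ k.+1)%N.
have K0 : (0 < K)%N by rewrite expn_gt0.
have mP0 : measurable (Y 0%N @^-1` pos R) by apply: measurable_funPTI; exact: mpos.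
have Epos : Y 0%N @^-1` pos R = [set w | 0 < Y 0%N w].
  by apply/seteqP; split => w; rewrite /pos /= in_itv /= andbT.
set pR := fine (P (Y 0%N @^-1` pos R)).
have fP : P (Y 0%N @^-1` pos R) \is a fin_num by rewrite fin_num_measure.
have EpR : P (Y 0%N @^-1` pos R) = pR%:E by rewrite fineK.
have pR0 : 0 < pR by rewrite -lte_fin -EpR Epos.
have pR1 : pR <= 1 by rewrite -lee_fin -EpR; apply: probability_le1.
set q := pR ^+ K.-1.
have q0 : 0 < q by rewrite exprn_gt0.
have q1 : q <= 1 by apply: exprn_ile1 => //; exact: ltW.
set rho := 1 - q.
set rho' := (1 + rho) / 2.
have r'0 : 0 < rho' by rewrite /rho' /rho; lra.
have r'1 : rho' < 1 by rewrite /rho' /rho; lra.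
have rr : rho <= rho' by rewrite /rho' /rho; lra.
set l := ln rho'.
have l0 : l < 0 by apply: ln_lt0; rewrite r'0 r'1.
have Kr0 : 0 < K%:R :> R by rewrite ltr0n.
exists (- l / K%:R); split; first by apply: divr_gt0 => //; lra.
exists rho'^-1, 1%N => N HN.
set M := (N.-1 %/ K)%N.
have [HM HMK] := divfacts K0 HN; rewrite -/M in HM HMK.
apply: (@le_trans _ _ (P (Sf Y K M))).
  apply: le_measure; rewrite ?inE; [exact: mEv|exact: mSf|].
  exact: Ev_sub.
have := key (K := K) HY (M := M) (J := [::]) (B := fun _ => setT) isT (fun j => ltac:(by [])) (fun j b => ltac:(by [])).
rewrite Fcap_nil setTI => ->; rewrite probability_setT mul1e lee_fin.
apply: (@le_trans _ _ (rho' ^+ M)).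
  have rho0 : 0 <= rho by rewrite /rho; lra.
  by apply: lerXn2r => //; rewrite nnegrE ?ltW.
have -> : rho' ^+ M = rho'^-1 * rho' ^+ M.+1 by rewrite exprS mulKf // gt_eqF.
rewrite ler_wpM2l //; first by rewrite invr_ge0 ltW.
rewrite -(lnK (x := rho')); last by rewrite posrE.
rewrite -expRM_natl ler_expR -/l.
have -> : - (- l / K%:R) * N%:R = l * N%:R / K%:R by field; rewrite gt_eqF.
rewrite ler_pdivlMr //.
have hN : (N%:R : R) <= M.+1%:R * K%:R by rewrite -natrM ler_nat.
nra.
Qed.
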